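(* For rankings $\succ$, $R$ and $R'$ on a finite set $\mathcal{X}$, the following are equivalent: (1) $R$ is more aligned with $\succ$ than $R'$; (2) for every non-empty $X\subseteq\mathcal{X}$, the $R$-highest alternative in $X$ is identical to or $\succ$-better than the $R'$-highest alternative in $X$.
   Context: A ranking on $\mathcal{X}$ is an irreflexive, transitive and total binary relation. $R$ is more aligned with $\succ$ than $R'$ if for all $x,y\in\mathcal{X}$ with $x\succ y$, $xR'y$ implies $xRy$. The $R$-highest alternative in $X$ is the $x\in X$ with $xRy$ for all $y\in X\setminus\{x\}$. *)

(* Defs.v *)
From mathcomp Require Import all_boot.
Set Implicit Arguments. Unset Strict Implicit. Unset Printing Implicit Defensive.

Definition ranking (T : finType) (R : rel T) : Prop :=
  irreflexive R /\ transitive R /\ (forall x y : T, x != y -> R x y || R y x).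

Definition more_aligned (T : finType) (P R R' : rel T) : Prop :=
  forall x y : T, P x y -> R' x y -> R x y.

Definition highest (T : finType) (R : rel T) (X : {set T}) (x : T) : Prop :=
  x \in X /\ forall y : T, y \in X -> y != x -> R x y.

(* Main.v *)
Require Import Defs.
From mathcomp Require Import all_boot.

Theorem mainTheorem13 (T : finType) (P R R' : rel T) :
  ranking P -> ranking R -> ranking R' ->
  (more_aligned P R R' <->
   (forall (X : {set T}) (x x' : T), X != set0 ->
      highest R X x -> highest R' X x' -> x = x' \/ P x x')).
Proof.
move=> [Pirr [Ptr Ptot]] [Rirr [Rtr Rtot]] [R'irr [R'tr R'tot]]; split.
- move=> Hal X x x' _ [xX Hx] [x'X Hx'].
  have [->|nx] := eqVneq x x'; first by left.
  right; case/orP: (Ptot _ _ nx) => // Px'x.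
  have R'x'x : R' x' x by apply: Hx'.
  have Rx'x := Hal _ _ Px'x R'x'x.
  have Rxx' : R x x' by apply: Hx; rewrite // eq_sym.
  by move: (Rtr _ _ _ Rxx' Rx'x); rewrite Rirr.
- move=> H x y Pxy R'xy.
  have nxy : x != y by apply/eqP => exy; move: Pxy; rewrite exy Pirr.
  case/orP: (Rtot _ _ nxy) => // Ryx.
  have X0 : [set x; y] != set0.
    by apply/set0Pn; exists x; rewrite !inE eqxx.
  have hR : highest R [set x; y] y.
    split; first by rewrite !inE eqxx orbT.
    by move=> z; rewrite !inE => /orP [] /eqP -> //; rewrite eqxx.
  have hR' : highest R' [set x; y] x.
    split; first by rewrite !inE eqxx.
    by move=> z; rewrite !inE => /orP [] /eqP -> //; rewrite eqxx.
  case: (H _ _ _ X0 hR hR') => [eyx|Pyx].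
    by move: nxy; rewrite eyx eqxx.
  by move: (Ptr _ _ _ Pxy Pyx); rewrite Pirr.
Qed.
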